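(* For every $f\in\mathrm{Sp}(1,\mathbb{R})=\mathrm{SL}(2,\mathbb{R})$, $s(f)=i^{-n(f)}$.
   Context: Let $V=\mathbb{R}^{2}$ with basis $p,q$ and symplectic form $\omega(p,q)=-\omega(q,p)=1$, $\omega(p,p)=\omega(q,q)=0$; $\mathrm{Sp}(1,\mathbb{R})$ is its isometry group; $\lambda_0=\mathrm{span}\{p\}$. A lagrangian is a subspace equal to its own $\omega$-orthogonal. Definition of $s$: for oriented lagrangians $\lambda_1,\lambda_2$ of a real symplectic space, let $\kappa=\lambda_1\cap\lambda_2$. If $\kappa=0$, $\epsilon(\lambda_1,\lambda_2)=\mathrm{sgn}\det(\omega(a_i,b_j))$ for positive bases $(a_i)$ of $\lambda_1$, $(b_j)$ of $\lambda_2$. If $\kappa\neq0$, orient $\kappa$ arbitrarily, orient $\lambda_i/\kappa$ so that a positive basis of $\kappa$ followed by lifts of a positive basis of $\lambda_i/\kappa$ is positive in $\lambda_i$, and set $\epsilon(\lambda_1,\lambda_2)=\epsilon(\lambda_1/\kappa,\lambda_2/\kappa)$ in $\kappa^\perp/\kappa$; if $\lambda_1=\lambda_2$, $\epsilon=1$ if orientations agree and $-1$ otherwise. Put $s(\lambda_1,\lambda_2)=i^{\dim\lambda_1-\dim\kappa}\epsilon(\lambda_1,\lambda_2)$, and $s(f)=s(\lambda_0,f(\lambda_0))$ with $\lambda_0$ arbitrarily oriented and $f(\lambda_0)$ given the image orientation. Definition of $n$: for $f\in\mathrm{Sp}(1,\mathbb{R})$, $\star_f$ is the nonsingular bilinear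 form on $(f-1)V$ with $a\star_f b=\omega(x,b)$ where $(f-1)x=a$; $\mathrm{sgn}[\det(\star_f)]\in\{\pm1\}$ is the sign of the determinant of its Gram matrix, with value $1$ when $f=\mathrm{Id}$; $\star_{f,\lambda_0}$ is its (symmetric) restriction to $\lambda_0\cap(f-1)V$. Then $n(f)=\mathrm{Signature}(\star_{f,\lambda_0})-\dim((f-1)V)-\mathrm{sgn}[\det(\star_f)]+1$. *)

(* Defs.v *)
From HB Require Import structures.
From mathcomp Require Import all_boot all_order all_algebra.
From mathcomp Require Import boolp reals complex.
Set Implicit Arguments. Unset Strict Implicit. Unset Printing Implicit Defensive.
Import Order.TTheory GRing.Theory Num.Theory.
Local Open Scope ring_scope.

(* V = R^2 as row vectors 'rV[R]_2; basis p = (1,0), q = (0,1).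
   A linear map f is represented by a matrix A acting on the right: v |-> v *m A. *)
Section Sp1.
Variable R : realType.

Definition vp : 'rV[R]_2 := \row_j (if j == 0 then 1 else 0).
Definition vq : 'rV[R]_2 := \row_j (if j == 0 then 0 else 1).

Definition omega (u v : 'rV[R]_2) : R := u 0 0 * v 0 1 - u 0 1 * v 0 0.

Definition symplectic (A : 'M[R]_2) : Prop :=
  forall u v : 'rV[R]_2, omega (u *m A) (v *m A) = omega u v.

Definition lambda0 : 'M[R]_(1, 2) := vp.

(* s(lambda1, lambda2) for oriented lagrangians of R^2 (lines), the oriented
   line lambda_i being given by a positively oriented basis vector a (resp. b). *)
Definition s_lag (a b : 'rV[R]_2) : R[i] :=
  let k := \rank (a :&: b)%MS in
  let eps : R :=
    if k == 0%N then (* kappa = 0: sign of det (omega(a_i, b_j)) (1x1 matrix) *)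
      (sgz (omega a b))%:~R
    else
      (if `[< exists2 c : R, 0 < c & b = c *: a >] then 1 else -1) in
  'i ^+ (1 - k) * (eps%:C)%C.

Definition s_of (A : 'M[R]_2) : R[i] := s_lag vp (vp *m A).

(* (f-1)V is the row space of A - 1. *)
Definition fm1 (A : 'M[R]_2) : 'M[R]_2 := A - 1%:M.

(* a *_f b = omega(x, b) where (f-1)x = a *)
Definition star (A : 'M[R]_2) (a b : 'rV[R]_2) : R :=
  omega (a *m pinvmx (fm1 A)) b.

Definition star_gram (A : 'M[R]_2) : 'M[R]_(\rank (fm1 A)) :=
  \matrix_(i, j) star A (row i (row_base (fm1 A))) (row j (row_base (fm1 A))).

(* sign of the determinant (the determinant of the empty Gram matrix is 1,
   so the value is 1 when f = Id, as required) *)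
Definition sgn_det_star (A : 'M[R]_2) : int := sgz (\det (star_gram A)).

Definition pos_index (b : 'rV[R]_2 -> 'rV[R]_2 -> R) (U : 'M[R]_2) : nat :=
  \max_(k < 3 | `[< exists S : 'M[R]_2, [/\ (S <= U)%MS, \rank S = k :> nat &
       forall v : 'rV[R]_2, (v <= S)%MS -> v != 0 -> 0 < b v v] >]) k.

Definition signature (b : 'rV[R]_2 -> 'rV[R]_2 -> R) (U : 'M[R]_2) : int :=
  (pos_index b U)%:Z - (pos_index (fun u v => - b u v) U)%:Z.

Definition n_of (A : 'M[R]_2) : int :=
  signature (star A) (lambda0 :&: fm1 A)%MS - (\rank (fm1 A))%:Z
  - sgn_det_star A + 1.

End Sp1.

(* Main.v *)
Require Import Defs.
From HB Require Import structures.
From mathcomp Require Import all_boot all_order all_algebra.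
From mathcomp Require Import boolp reals complex.
From mathcomp Require Import ring lra zify.
Import Order.TTheory GRing.Theory Num.Theory.
Local Open Scope ring_scope.

Section S.
Variable R : realType.

Lemma ord2_1 : (lift ord0 ord0 : 'I_2) = 1.
Proof. by apply: val_inj. Qed.

Lemma ord2P (j : 'I_2) : j = 0 \/ j = 1.
Proof. case: j => [[|[|k]] Hk]; [left|right|by []]; exact: val_inj. Qed.

Lemma mulE2 m n (U : 'M[R]_(m,2)) (V : 'M[R]_(2,n)) i j :
  (U *m V) i j = U i 0 * V 0 j + U i 1 * V 1 j.
Proof. by rewrite mxE !big_ord_recl big_ord0 addr0 ord2_1. Qed.

Lemma det2 (M : 'M[R]_2) : \det M = M 0 0 * M 1 1 - M 0 1 * M 1 0.
Proof.
rewrite (expand_det_row _ 0) !big_ord_recl big_ord0 addr0 /cofactor !det_mx11 !mxE /=.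
rewrite /bump /= mul1r mulN1r.
have e1 : lift 0 0 = 1 :> 'I_2 by apply/val_inj.
have e2 : lift ord0 0 = 1 :> 'I_2 by apply/val_inj.
have e3 : lift ord0 ord0 = 1 :> 'I_2 by apply/val_inj.
have e4 : lift (lift ord0 ord0) 0 = 0 :> 'I_2 by apply/val_inj.
rewrite ?e4 ?e1 ?e2 ?e3. ring.
Qed.

Lemma omegaBl (u w v : 'rV[R]_2) : omega (u - w) v = omega u v - omega w v.
Proof. rewrite /omega !mxE; ring. Qed.
Lemma omegaBr (u v w : 'rV[R]_2) : omega u (v - w) = omega u v - omega u w.
Proof. rewrite /omega !mxE; ring. Qed.
Lemma omegaZl t (u v : 'rV[R]_2) : omega (t *: u) v = t * omega u v.
Proof. rewrite /omega !mxE; ring. Qed.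
Lemma omegaZr t (u v : 'rV[R]_2) : omega u (t *: v) = t * omega u v.
Proof. rewrite /omega !mxE; ring. Qed.

Lemma vpE (i : 'I_2) : vp R 0 i = if i == 0 then 1 else 0. Proof. by rewrite mxE. Qed.

Variable A : 'M[R]_2.
Hypothesis sA : symplectic A.

Lemma detA1 : A 0 0 * A 1 1 - A 0 1 * A 1 0 = 1.
Proof.
have := sA (vp R) (vq R); rewrite /omega !mulE2 !mxE /=.
rewrite !(mul1r, mul0r, add0r, addr0, subr0, mulr1) => h.
by rewrite h.
Qed.

Lemma star_eq x u v : x *m fm1 A = u -> (v <= fm1 A)%MS -> star A u v = omega x v.
Proof.
move=> xu /submxP [z ->].
have uM : (u <= fm1 A)%MS by rewrite -xu submxMl.
have yM := mulmxKpV uM.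
rewrite /star; set y := u *m pinvmx (fm1 A) in yM *.
apply/eqP; rewrite -subr_eq0 -omegaBl; apply/eqP.
have : (y - x) *m A = y - x.
  have hw : (y - x) *m fm1 A = 0 by rewrite mulmxBl yM xu subrr.
  by move: hw; rewrite /fm1 mulmxBr mulmx1 => /eqP; rewrite subr_eq0 => /eqP.
move=> e; rewrite /fm1 mulmxBr mulmx1 omegaBr -{1}e sA subrr //.
Qed.

Lemma sub_rowP (u v : 'rV[R]_2) : (u <= v)%MS -> exists t, u = t *: v.
Proof. by case/submxP=> D ->; exists (D 0 0); rewrite {1}(mx11_scalar D) mul_scalar_mx. Qed.

Lemma cap_nz m (u : 'rV[R]_2) (v : 'M[R]_(m,2)) : \rank (u :&: v)%MS != 0%N -> (u <= v)%MS.
Proof.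
move=> h.
have le1 : (\rank u <= 1)%N by apply: rank_leq_row.
have L := mxrank_leqif_eq (capmxSl u v).
case E: (u :&: v == u)%MS.
  by move/andP: E => [_ hu]; exact: submx_trans hu (capmxSr _ _).
have := ltn_leqif L; rewrite E /= => hlt.
move: h hlt le1; lia.
Qed.

Lemma wE j : (vp R *m A) 0 j = A 0 j.
Proof. by rewrite mulE2 !vpE /= mul1r mul0r addr0. Qed.

Lemma vp_neq0 : vp R != 0.
Proof. by apply/eqP => /rowP /(_ 0); rewrite vpE mxE /= => /eqP; rewrite oner_eq0. Qed.

Lemma sE : s_of A = if A 0 1 != 0 then 'i * (((sgz (A 0 1))%:~R : R)%:C)%C
                    else (((sgz (A 0 0))%:~R : R)%:C)%C.
Proof.
rewrite /s_of /s_lag /=.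
case: (boolP (A 0 1 == 0)) => hb /=; last first.
  have -> : \rank (vp R :&: vp R *m A)%MS = 0%N.
    apply/eqP; move: hb; apply: contraNT => /cap_nz /sub_rowP [t ht].
    have := congr1 (fun M : 'rV[R]_2 => M 0 1) ht; rewrite /= [in RHS]mxE vpE wE /= => h.
    have := congr1 (fun M : 'rV[R]_2 => M 0 0) ht; rewrite /= [in RHS]mxE vpE wE /= => h'.
    apply/eqP; apply: (mulfI (x:=t)); last by rewrite -h mulr0.
    by apply/eqP => t0; move: h'; rewrite t0 mul0r => /eqP; rewrite oner_eq0.
  rewrite /= expr1 /omega; congr (_ * ((sgz _)%:~R)%:C)%C.
  rewrite !vpE !wE /=; ring.
have ha : A 0 0 != 0.
  by apply/eqP => a0; have := detA1; rewrite a0 (eqP hb) !mul0r subr0 => /eqP; rewrite eq_sym oner_eq0.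
have wa : vp R *m A = A 0 0 *: vp R.
  by apply/rowP => j; rewrite wE mxE vpE; case: (ord2P j) => ->; rewrite /= ?mulr1 ?mulr0 ?(eqP hb).
have -> : \rank (vp R :&: vp R *m A)%MS = 1%N.
  have pw : (vp R <= vp R *m A)%MS.
    by rewrite wa -[X in (X <= _)%MS](scale1r (vp R)) -(mulVf ha) -scalerA scalemx_sub.
  by rewrite (capmx_idPl pw) rank_rV vp_neq0.
rewrite /= expr0 mul1r.
have [a0|a0] := ltrP 0 (A 0 0).
  rewrite gtr0_sgz //; case: asboolP => // [] [] ; exists (A 0 0) => //.
have a0' : A 0 0 < 0 by rewrite lt_neqAle ha a0.
rewrite ltr0_sgz //; case: asboolP => // [[c c0]]; rewrite wa => /rowP /(_ 0).
by rewrite !mxE /= !mulr1 => ca; move: c0; rewrite -ca ltNge (ltW a0').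
Qed.

Lemma pos0 (b : 'rV[R]_2 -> 'rV[R]_2 -> R) (U : 'M[R]_2) :
  \rank U = 0%N -> pos_index b U = 0%N.
Proof.
move=> hU; apply/eqP; rewrite -leqn0; apply/bigmax_leqP => k /asboolP [S [SU rS _]].
by rewrite -rS; have := mxrankS SU; rewrite hU.
Qed.

Lemma sig0 (b : 'rV[R]_2 -> 'rV[R]_2 -> R) (U : 'M[R]_2) :
  \rank U = 0%N -> signature b U = 0.
Proof. by move=> hU; rewrite /signature !pos0. Qed.

Lemma rank_vp : \rank (vp R) = 1%N.
Proof. by rewrite rank_rV vp_neq0. Qed.

Lemma pos1 (b : 'rV[R]_2 -> 'rV[R]_2 -> R) (U : 'M[R]_2) :
  (U == vp R)%MS -> (forall t, b (t *: vp R) (t *: vp R) = t ^+ 2 * b (vp R) (vp R)) ->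
  pos_index b U = (0 < b (vp R) (vp R)).
Proof.
move=> hU hb; have rU : \rank U = 1%N by rewrite (eqmx_rank hU) rank_vp.
apply/eqP; rewrite eqn_leq; apply/andP; split.
  apply/bigmax_leqP => k /asboolP [S [SU rS pos]].
  have L := mxrank_leqif_eq SU.
  case E: (S == U)%MS.
    have pS : (vp R <= S)%MS.
      by move/andP: E => [_ h]; apply: submx_trans h; case/andP: hU.
    by have := pos _ pS vp_neq0 => ->; rewrite -rS (eqmx_rank E) rU.
  have := ltn_leqif L; rewrite E /= rU => h; lia.
case: (boolP (0 < b (vp R) (vp R))) => hp //=; rewrite /pos_index; refine (leq_trans _ (leq_bigmax_cond (F := fun k : 'I_3 => nat_of_ord k) (1 : 'I_3) _)) => //; apply/asboolP.
exists U; split; [exact: submx_refl | by rewrite rU | ].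
move=> v vU v0; have [t ht] := sub_rowP _ _ (submx_trans vU (proj1 (andP hU))).
have t0 : t != 0 by apply: contraNneq v0 => t0; rewrite ht t0 scale0r.
by rewrite ht hb; apply: mulr_gt0 => //; rewrite lt_def sqr_ge0 andbT sqrf_eq0 t0.
Qed.

Lemma sig1 (b : 'rV[R]_2 -> 'rV[R]_2 -> R) (U : 'M[R]_2) :
  (U == vp R)%MS -> (forall t, b (t *: vp R) (t *: vp R) = t ^+ 2 * b (vp R) (vp R)) ->
  signature b U = sgz (b (vp R) (vp R)).
Proof.
move=> hU hb; rewrite /signature (pos1 _ _ hU hb) (@pos1 (fun u v => - b u v) _ hU); last first.
  by move=> t /=; rewrite hb mulrN.
have [x0|x0|x0] := ltgtP 0 (b (vp R) (vp R)).
- by rewrite gtr0_sgz // oppr_gt0 ltNge (ltW x0).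
- by rewrite ltr0_sgz // oppr_gt0 x0.
- by rewrite -x0 oppr0 ltxx sgz0.
Qed.

Lemma starZ t (u : 'rV[R]_2) : star A (t *: u) (t *: u) = t ^+ 2 * star A u u.
Proof. by rewrite /star -scalemxAl omegaZl omegaZr expr2 mulrA. Qed.

Lemma sgz_sq (x y : R) : x != 0 -> sgz (x ^+ 2 * y) = sgz y.
Proof. by move=> x0; rewrite sgzM expr2 sgzM mulz_sg x0 mul1r. Qed.

Lemma Me i j : fm1 A i j = A i j - (i == j)%:R.
Proof. by rewrite /fm1 !mxE. Qed.

Lemma detM : \det (fm1 A) = 2 - A 0 0 - A 1 1.
Proof.
have := detA1; rewrite det2 !Me /= => h.
apply/eqP; rewrite -subr_eq0; apply/eqP.
transitivity (A 0 0 * A 1 1 - A 0 1 * A 1 0 - 1); first ring.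
by rewrite h subrr.
Qed.

Lemma rank2 : \det (fm1 A) != 0 -> \rank (fm1 A) = 2%N.
Proof. by move=> h; rewrite mxrank_unit // unitmxE unitfE. Qed.

Lemma rank_not2 : \det (fm1 A) = 0 -> \rank (fm1 A) != 2%N.
Proof.
move=> h; apply/negP => /eqP r2.
have : row_free (fm1 A) by rewrite /row_free r2.
by rewrite row_free_unit unitmxE unitfE h eqxx.
Qed.

Lemma rank1_eq (w : 'rV[R]_2) : \rank (fm1 A) = 1%N -> (w <= fm1 A)%MS -> w != 0 ->
  (fm1 A <= w)%MS.
Proof.
move=> r1 wM w0; have := mxrank_leqif_eq wM.
case E: (w == fm1 A)%MS; first by case/andP: E.
by move/ltn_leqif; rewrite r1 rank_rV w0.
Qed.

Lemma rank1_sign x w r : \rank (fm1 A) = 1%N -> x *m fm1 A = w -> w != 0 ->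
  (r <= fm1 A)%MS -> r != 0 -> sgz (star A r r) = sgz (omega x w).
Proof.
move=> r1 xw w0 rM r0.
have wM : (w <= fm1 A)%MS by rewrite -xw submxMl.
have [t rt] := sub_rowP _ _ (submx_trans rM (rank1_eq _ r1 wM w0)).
have t0 : t != 0 by apply: contraNneq r0 => t0; rewrite rt t0 scale0r.
by rewrite rt starZ sgz_sq // (star_eq _ _ _ xw wM).
Qed.

Lemma sgzV (x : R) : sgz x^-1 = sgz x.
Proof.
have [x0|x0|x0] := ltgtP 0 x; last by rewrite -x0 invr0.
- by rewrite !gtr0_sgz // invr_gt0.
- by rewrite !ltr0_sgz // invr_lt0.
Qed.

Lemma a1d1 : \det (fm1 A) = 0 -> A 0 1 = 0 -> A 0 0 = 1 /\ A 1 1 = 1.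
Proof.
rewrite detM => hD hb.
have h : (A 0 0 - 1) ^+ 2 = 0.
  transitivity (A 0 0 * (A 0 0 + A 1 1 - 2) - (A 0 0 * A 1 1 - A 0 1 * A 1 0 - 1)
     - A 0 1 * A 1 0); first ring.
  rewrite detA1 hb.
  rewrite (_ : A 0 0 + A 1 1 - 2 = - (2 - A 0 0 - A 1 1)); last ring.
  rewrite hD; ring.
move/eqP: h; rewrite sqrf_eq0 subr_eq0 => /eqP a1; split => //.
move: hD; rewrite a1 => hD.
transitivity (1 - (2 - 1 - A 1 1)); first ring.
rewrite hD; ring.
Qed.

Lemma rowEnt m (M : 'M[R]_(m, 2)) i j : (row i M) 0 j = M i j.
Proof. by rewrite mxE. Qed.

Definition RHSg := if \det (fm1 A) != 0 then sgz (\det (fm1 A))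
  else if fm1 A == 0 then 1
  else if A 0 1 == 0 then - sgz (A 1 0) else sgz (A 0 1).

Lemma gram_gen n (B : 'M[R]_(n, 2)) : (B :=: fm1 A)%MS -> row_free B ->
  sgz (\det (\matrix_(i, j) star A (row i B) (row j B))) = RHSg.
Proof.
move=> eqB freeB.
have rB : \rank B = n by apply/eqP.
have rM : \rank (fm1 A) = n by rewrite -eqB.
have BM : (B <= fm1 A)%MS by rewrite eqB.
rewrite /RHSg.
case: n B eqB freeB rB BM rM => [|[|[|n]]] B eqB freeB rB BM rM.
-
  have M0 : fm1 A = 0 by apply/eqP; rewrite -mxrank_eq0 rM.
  by rewrite det_mx00 M0 det0 !eqxx /= sgz1.
-
  rewrite det_mx11 mxE.
  have hD : \det (fm1 A) = 0.
    by apply/eqP; apply: contraTT (isT : (1 != 2)%N) => /rank2; rewrite rM.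
  have M0 : fm1 A != 0 by rewrite -mxrank_eq0 rM.
  have r0 : row 0 B != 0.
    apply: contraTneq isT => r0; suff : B = 0 by move=> B0; move: rB; rewrite B0 mxrank0.
    apply/matrixP => i j; rewrite (ord1 i); have := congr1 (fun M : 'rV[R]_2 => M 0 j) r0.
    by rewrite !mxE.
  have rMs : (row 0 B <= fm1 A)%MS := submx_trans (row_sub 0 B) BM.
  rewrite hD eqxx /= (negbTE M0).
  case: (boolP (A 0 1 == 0)) => hb.
    have [a1 d1] := a1d1 hD (eqP hb).
    have c0 : A 1 0 != 0.
      apply/eqP => c0; move/eqP: M0; apply; apply/matrixP => i j; rewrite Me mxE.
      by case: (ord2P i) => ->; case: (ord2P j) => -> /=; rewrite ?a1 ?d1 ?c0 ?(eqP hb) subrr.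
    set x := (A 1 0)^-1 *: vq R.
    have xw : x *m fm1 A = vp R.
      apply/rowP => j; rewrite mulE2 !Me !mxE /=.
      by case: (ord2P j) => -> /=; rewrite ?d1; field.
    rewrite (rank1_sign _ _ _ rM xw vp_neq0 rMs r0) /omega !mxE /=.
    by rewrite (_ : _ - _ = - (A 1 0)^-1) ?sgzN ?sgzV //; ring.
  have w0 : vp R *m fm1 A != 0.
    apply: contraNneq hb => /rowP /(_ 1); rewrite mulE2 !Me !mxE /= => h.
    by rewrite -h; apply/eqP; ring.
  rewrite (rank1_sign _ _ _ rM (erefl _) w0 rMs r0) /omega mulE2 !Me !mxE /=.
  congr sgz; ring.
-
  have hU : fm1 A \in unitmx by rewrite -row_free_unit /row_free rM.
  have hD : \det (fm1 A) != 0 by rewrite -unitfE -unitmxE.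
  rewrite hD.
  set X := B *m pinvmx (fm1 A).
  have hX : X *m fm1 A = B := mulmxKpV BM.
  have BU : B \in unitmx by rewrite -row_free_unit.
  have dX : \det X != 0.
    apply: contraTneq BU => dX0; rewrite unitmxE unitfE -hX det_mulmx dX0 mul0r.
    by rewrite eqxx.
  have Gij i j : (\matrix_(i, j) star A (row i B) (row j B)) i j =
      omega (row i X) (row j (X *m fm1 A)).
    by rewrite mxE /star -row_mul hX.
  clearbody X.
  rewrite det2 !Gij /omega !rowEnt !mulE2.
  rewrite -[RHS](sgz_sq _ (\det (fm1 A)) dX); congr sgz; rewrite !det2; ring.
- by have := rank_leq_col (fm1 A); rewrite rM.
Qed.

Lemma gram_sign : sgn_det_star A = RHSg.
Proof. exact: gram_gen (eq_row_base _) (row_base_free _). Qed.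

Lemma sig_vp (x : 'rV[R]_2) : x *m fm1 A = vp R ->
  signature (star A) (lambda0 R :&: fm1 A)%MS = sgz (omega x (vp R)).
Proof.
move=> xp.
have pM : (vp R <= fm1 A)%MS by rewrite -xp submxMl.
rewrite /lambda0 (sig1 (star A) (vp R :&: fm1 A)%MS) ?(star_eq _ _ _ xp pM) //.
- by apply/eqmxP; apply/capmx_idPl.
- by move=> t; rewrite starZ (star_eq _ _ _ xp pM).
Qed.

Lemma rank1 : \det (fm1 A) = 0 -> fm1 A != 0 -> \rank (fm1 A) = 1%N.
Proof.
move=> hD M0; have := rank_not2 hD; have := rank_leq_col (fm1 A).
rewrite -mxrank_eq0 in M0; move: M0; lia.
Qed.

Lemma nI : \det (fm1 A) != 0 ->
  n_of A = sgz (A 0 1) * sgz (\det (fm1 A)) - 2 - sgz (\det (fm1 A)) + 1.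
Proof.
move=> hD.
pose x : 'rV[R]_2 := (\det (fm1 A))^-1 *: \row_j (if j == 0 then A 1 1 - 1 else - A 0 1).
have DE : \det (fm1 A) = (A 0 0 - 1) * (A 1 1 - 1) - A 0 1 * A 1 0.
  by rewrite det2 !Me /=; ring.
have xp : x *m fm1 A = vp R.
  apply/rowP => j; rewrite mulE2 !Me !mxE /=.
  move: hD; rewrite DE => hD.
  by case: (ord2P j) => -> /=; field.
rewrite /n_of (sig_vp _ xp) rank2 // gram_sign /RHSg hD /omega !mxE /=.
congr (_ - _ - _ + _).
rewrite (_ : _ - _ = A 0 1 * (\det (fm1 A))^-1); last ring.
by rewrite sgzM sgzV.
Qed.

Lemma nIIa : \det (fm1 A) = 0 -> fm1 A != 0 -> A 0 1 = 0 -> n_of A = 0.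
Proof.
move=> hD M0 hb.
have [a1 d1] := a1d1 hD hb.
have c0 : A 1 0 != 0.
  apply/eqP => c0; move/eqP: M0; apply; apply/matrixP => i j; rewrite Me mxE.
  by case: (ord2P i) => ->; case: (ord2P j) => -> /=; rewrite ?a1 ?d1 ?c0 ?hb subrr.
pose x := (A 1 0)^-1 *: vq R.
have xw : x *m fm1 A = vp R.
  apply/rowP => j; rewrite mulE2 !Me !mxE /=.
  by case: (ord2P j) => -> /=; rewrite ?d1; field.
rewrite /n_of (sig_vp _ xw) (rank1 hD M0) gram_sign /RHSg hD eqxx /= (negbTE M0) hb eqxx.
rewrite /omega !mxE /=.
rewrite (_ : _ - _ = - (A 1 0)^-1); last ring.
rewrite sgzN sgzV; set z := sgz (A 1 0).
by rewrite opprK; lia.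
Qed.

Lemma nIIb : \det (fm1 A) = 0 -> fm1 A != 0 -> A 0 1 != 0 -> n_of A = - sgz (A 0 1).
Proof.
move=> hD M0 hb.
have r1 := rank1 hD M0.
have c0 : \rank (lambda0 R :&: fm1 A)%MS = 0%N.
  apply/eqP; move: hb; apply: contraNT => /cap_nz pM.
  have := rank1_eq _ r1 pM vp_neq0.
  have := row_sub 0 (fm1 A) => h1 h2.
  have [t ht] := sub_rowP _ _ (submx_trans h1 h2).
  have := congr1 (fun M : 'rV[R]_2 => M 0 1) ht; rewrite /= !mxE /= mulr0.
  by rewrite subr0 => ->.
rewrite /n_of sig0 // r1 gram_sign /RHSg hD eqxx /= (negbTE M0) (negbTE hb).
lia.
Qed.

Lemma nIII : fm1 A = 0 -> n_of A = 0.
Proof.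
move=> M0.
rewrite /n_of sig0; last by rewrite M0 capmx0 mxrank0.
rewrite gram_sign /RHSg M0 mxrank0 det0 !eqxx /=.
lia.
Qed.

Lemma cz (k : int) : (((k%:~R : R)%:C)%C : R[i]) = k%:~R.
Proof. exact: rmorph_int. Qed.
End S.

Lemma ipow (C : numClosedFieldType) (k z : int) : z = k -> ('i : C) ^ z = 'i ^ k.
Proof. by move=> ->. Qed.

Section Main.
Variable R : realType.
Variable A : 'M[R]_2.
Hypothesis sA : symplectic A.

Lemma i3 : ('i : R[i]) ^+ 3 = - 'i.
Proof. by rewrite exprS sqrCi mulrN1. Qed.

Lemma main : s_of A = 'i ^ (- n_of A).
Proof.
rewrite (sE _ _ sA) !cz.
case: (boolP (\det (fm1 A) == 0)) => hD.
  case: (boolP (fm1 A == 0)) => M0.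
    have hb : A 0 1 = 0.
      by move/eqP/matrixP: M0 => /(_ 0 1); rewrite Me !mxE /= subr0.
    have ha : A 0 0 = 1.
      by move/eqP/matrixP: M0 => /(_ 0 0); rewrite Me !mxE /= => /eqP; rewrite subr_eq0 => /eqP.
    by rewrite (nIII _ _ sA (eqP M0)) hb ha eqxx /= sgz1.
  case: (boolP (A 0 1 == 0)) => hb.
    have [a1 _] := a1d1 _ _ sA (eqP hD) (eqP hb).
    by rewrite (nIIa _ _ sA (eqP hD) M0 (eqP hb)) /= a1 sgz1.
  rewrite (nIIb _ _ sA (eqP hD) M0 hb) opprK /=.
  have [b0|b0|b0] := ltgtP 0 (A 0 1); last by move: hb; rewrite -b0 eqxx.
    by rewrite gtr0_sgz // mulr1.
  by rewrite ltr0_sgz // mulrN1 exprN1 invCi.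
rewrite (nI _ _ sA hD).
have key : A 0 1 = 0 -> \det (fm1 A) * A 0 0 = - (A 0 0 - 1) ^+ 2.
  move=> hb; rewrite (detM _ _ sA).
  transitivity (- (A 0 0 - 1) ^+ 2 - (A 0 0 * A 1 1 - A 0 1 * A 1 0 - 1) - A 0 1 * A 1 0);
    first ring.
  by rewrite (detA1 _ _ sA) hb subrr mul0r !subr0.
have an1 : A 0 1 = 0 -> A 0 0 != 1.
  move=> hb; apply/eqP => a1; move: hD; rewrite (detM _ _ sA) a1.
  have := detA1 _ _ sA; rewrite hb a1 mul0r subr0 mul1r => ->.
  by rewrite (_ : 2 - 1 - 1 = 0 :> R) ?eqxx //; ring.
have sq : A 0 1 = 0 -> 0 < (A 0 0 - 1) ^+ 2.
  by move=> hb; rewrite lt_def sqr_ge0 andbT sqrf_eq0 subr_eq0 an1.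
have [D0|D0|D0] := ltgtP 0 (\det (fm1 A)); last by move: hD; rewrite -D0 eqxx.
- rewrite (gtr0_sgz D0).
  have [b0|b0|b0] := ltgtP 0 (A 0 1).
  + rewrite gtr0_sgz // /= (@ipow _ 1); last by lia.
    by rewrite mulr1z mulr1.
  + rewrite ltr0_sgz // /= mulrN1z mulrN1 (@ipow _ 3%:Z); last by lia.
    by rewrite -exprnP i3.
  + rewrite -b0 sgz0 ?eqxx /= (@ipow _ 2%:Z); last by lia.
    have a0 : A 0 0 < 0.
      have := key (esym b0); rewrite -oppr_gt0 => h.
      have : 0 < - (\det (fm1 A) * A 0 0) by rewrite h oppr_gt0 oppr_lt0 sq.
      by rewrite -mulrN pmulr_rgt0 // oppr_gt0.
    by rewrite ltr0_sgz // -exprnP sqrCi.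
- rewrite (ltr0_sgz D0).
  have [b0|b0|b0] := ltgtP 0 (A 0 1).
  + rewrite gtr0_sgz // /= (@ipow _ 1); last by lia.
    by rewrite mulr1z mulr1.
  + rewrite ltr0_sgz // /= mulrN1z mulrN1 (@ipow _ (-1)); last by lia.
    by rewrite exprN1 invCi.
  + rewrite -b0 sgz0 ?eqxx /= (@ipow _ 0); last by lia.
    have a0 : 0 < A 0 0.
      have := key (esym b0) => h.
      have : 0 < (\det (fm1 A)) * - A 0 0 by rewrite mulrN h opprK sq.
      by rewrite nmulr_rgt0 // oppr_lt0.
    by rewrite gtr0_sgz.
Qed.
End Main.

Theorem proposition3p3 (R : realType) (A : 'M[R]_2) :
  symplectic A -> s_of A = 'i ^ (- n_of A).
Proof. move=> sA; exact: main. Qed.
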